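(* Let $g(x)=F_2(x,x,x)$ for $x\ge0$ and $q(x)=x+\frac{f(x)}{f'(x)}$. If $g$ has no $2$-cycle (no $x\ne y$ in $[0,\infty)$ with $g(x)=y$, $g(y)=x$) and $q(x)>-\frac{h}{b}\left(1+\frac1b\right)$ for all $x\ge0$, then the unique positive equilibrium $\bar x$ of $x_{n+1}=x_nf(x_{n-2})+h$ is globally attracting: every solution with initial values $x_{-2},x_{-1},x_0\ge0$ converges to $\bar x$.
   Context: Let $h>0$ and $f:[0,\infty)\to(0,\infty)$ be differentiable with $f'(x)<0$ for all $x\ge 0$, $\lim_{t\to\infty}tf(t)=0$, and $b:=f(0)$ (so $f\le b$). $F_2(x,y,z)=xf(x)f(y)f(z)+hf(x)f(y)+hf(x)+h$ is the twice-expanded map of $F_0(x,y,z)=xf(z)+h$, and $\bar x$ is the unique solution in $[0,\infty)$ of $x=xf(x)+h$. *)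

(* Defs.v *)
From Stdlib Require Import Reals.
Open Scope R_scope.

(* f, restricted to [0,oo), is differentiable with derivative f' there
   (one-sided at 0, since the domain of f is [0,oo)). *)
Definition has_deriv_on_nonneg (f f' : R -> R) : Prop :=
  forall x, 0 <= x ->
    forall eps, 0 < eps -> exists delta, 0 < delta /\
      forall y, 0 <= y -> y <> x -> Rabs (y - x) < delta ->
        Rabs ((f y - f x) / (y - x) - f' x) < eps.

Definition tf_tends_to_0 (f : R -> R) : Prop :=
  forall eps, 0 < eps -> exists M, forall t, M <= t -> Rabs (t * f t) < eps.

Definition F2 (h : R) (f : R -> R) (x y z : R) : R :=
  x * f x * f y * f z + h * f x * f y + h * f x + h.

Definition gmap (h : R) (f : R -> R) (x : R) : R := F2 h f x x x.

Definition qmap (f f' : R -> R) (x : R) : R := x + f x / f' x.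

Definition no_two_cycle (g : R -> R) : Prop :=
  forall x y, 0 <= x -> 0 <= y -> g x = y -> g y = x -> x = y.

(* solution of x_{n+1} = x_n f(x_{n-2}) + h; u k stands for x_{k-2} *)
Definition is_solution (h : R) (f : R -> R) (u : nat -> R) : Prop :=
  0 <= u 0%nat /\ 0 <= u 1%nat /\ 0 <= u 2%nat /\
  forall n, u (n + 3)%nat = u (n + 2)%nat * f (u n) + h.

(* Main.v *)
Require Import Defs.
From Stdlib Require Import Reals Lra Lia Psatz.
From Coquelicot Require Import Coquelicot.
Open Scope R_scope.

Lemma Rmax_lip z x : Rabs (Rmax 0 z - Rmax 0 x) <= Rabs (z - x).
Proof. unfold Rmax; destruct (Rle_dec 0 z); destruct (Rle_dec 0 x);
 unfold Rabs; repeat destruct Rcase_abs; lra. Qed.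

Lemma local_lip (f f' : R -> R) p y :
  Rabs ((f y - f p) / (y - p) - f' p) < 1 -> y <> p ->
  Rabs (f y - f p) <= (Rabs (f' p) + 1) * Rabs (y - p).
Proof.
  intros H Hne.
  assert (Hyp : y - p <> 0) by lra.
  replace (f y - f p) with (((f y - f p) / (y - p)) * (y - p)) by (field; auto).
  rewrite Rabs_mult. apply Rmult_le_compat_r. apply Rabs_pos.
  replace ((f y - f p) / (y - p)) with (((f y - f p) / (y - p) - f' p) + f' p) by ring.
  eapply Rle_trans. apply Rabs_triang. lra.
Qed.

Lemma ft_cont (f f' : R -> R) (hder : has_deriv_on_nonneg f f') x :
  continuity_pt (fun t => f (Rmax 0 t)) x.
Proof.
  unfold continuity_pt, continue_in, limit1_in, limit_in. intros eps He.
  simpl. unfold R_dist.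
  set (p := Rmax 0 x).
  assert (Hp : 0 <= p) by apply Rmax_l.
  destruct (hder p Hp 1 Rlt_0_1) as [d [Hd Hy]].
  set (K := Rabs (f' p) + 1).
  assert (HK : 0 < K) by (unfold K; pose proof (Rabs_pos (f' p)); lra).
  exists (Rmin d (eps / K)). split.
  { apply Rmin_pos; auto. apply Rdiv_lt_0_compat; auto. }
  intros z [_ Hz].
  pose proof (Rmax_lip z x) as Hl. fold p in Hl.
  pose proof (Rmin_l d (eps / K)). pose proof (Rmin_r d (eps / K)).
  set (w := Rmax 0 z) in *.
  destruct (Req_dec w p) as [E|E].
  { rewrite E. replace (f p - f p) with 0 by ring. rewrite Rabs_R0. lra. }
  assert (Hw : 0 <= w) by apply Rmax_l.
  pose proof (local_lip f f' p w (Hy w Hw E ltac:(lra)) E) as HL. fold K in HL.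
  eapply Rle_lt_trans. apply HL.
  apply Rle_lt_trans with (K * Rabs (z - x)).
  { apply Rmult_le_compat_l; lra. }
  apply Rlt_le_trans with (K * (eps / K)).
  { apply Rmult_lt_compat_l; lra. }
  right. field. lra.
Qed.

Lemma ft_deriv (f f' : R -> R) (hder : has_deriv_on_nonneg f f') x :
  0 < x -> derivable_pt_lim (fun t => f (Rmax 0 t)) x (f' x).
Proof.
  intros Hx eps He.
  destruct (hder x (Rlt_le _ _ Hx) eps He) as [d [Hd Hy]].
  assert (Hm : 0 < Rmin d x) by (apply Rmin_pos; auto).
  exists (mkposreal _ Hm). intros hh Hh Hha. simpl in Hha.
  pose proof (Rmin_l d x). pose proof (Rmin_r d x).
  assert (Hpos : 0 < x + hh) by (unfold Rabs in Hha; destruct Rcase_abs; lra).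
  rewrite (Rmax_right 0 (x+hh)) by lra. rewrite (Rmax_right 0 x) by lra.
  specialize (Hy (x + hh) ltac:(lra) ltac:(lra)).
  replace (x + hh - x) with hh in Hy by ring. apply Hy. lra.
Qed.

Lemma decr_MVT (phi dphi : R -> R) :
  (forall x, continuity_pt phi x) ->
  (forall x, 0 < x -> derivable_pt_lim phi x (dphi x)) ->
  (forall x, 0 <= x -> dphi x < 0) ->
  forall a b, 0 <= a -> a < b -> phi b < phi a.
Proof.
  intros Hc Hd Hn a b Ha Hab.
  destruct (MVT_gen phi a b dphi) as [c [Hc1 Hc2]].
  - intros x Hx. rewrite Rmin_left in Hx by lra. rewrite Rmax_right in Hx by lra.
    apply is_derive_Reals. apply Hd. lra.
  - intros; apply Hc.
  - rewrite Rmin_left in Hc1 by lra. rewrite Rmax_right in Hc1 by lra.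
    assert (dphi c < 0) by (apply Hn; lra).
    assert (dphi c * (b - a) < 0) by (apply Rmult_neg_pos; lra).
    lra.
Qed.

Lemma ft_eq (f : R -> R) x : 0 <= x -> f (Rmax 0 x) = f x.
Proof. intros; rewrite Rmax_right; auto. Qed.

Lemma fdec (f f' : R -> R) (hder : has_deriv_on_nonneg f f')
  (hneg : forall x, 0 <= x -> f' x < 0) a b : 0 <= a -> a < b -> f b < f a.
Proof.
  intros Ha Hab.
  pose proof (decr_MVT (fun t => f (Rmax 0 t)) f' (ft_cont f f' hder)
    (ft_deriv f f' hder) hneg a b Ha Hab) as H.
  simpl in H. rewrite !ft_eq in H by lra. exact H.
Qed.

Lemma fle (f f' : R -> R) (hder : has_deriv_on_nonneg f f')
  (hneg : forall x, 0 <= x -> f' x < 0) a b : 0 <= a -> a <= b -> f b <= f a.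
Proof.
  intros Ha Hab. destruct (Req_dec a b). subst; lra.
  left; apply (fdec f f'); auto; lra.
Qed.

Lemma bracket_pos h b a e q : 0 < h -> 0 < b -> 0 < a -> a <= b -> 0 < e -> e <= b ->
  q > - (h / b) * (1 + 1 / b) -> 0 < a * e * q + h * (a + 1).
Proof.
  intros Hh Hb Ha Hab He Heb Hq.
  destruct (Rle_lt_dec 0 q).
  - assert (0 <= a * e * q) by (apply Rmult_le_pos; [apply Rmult_le_pos|]; lra). nra.
  - assert (H1 : a * e * q >= a * b * q).
    { assert (0 <= (- (a * q)) * (b - e)) by (apply Rmult_le_pos; nra). nra. }
    assert (H2 : b * q > - h - h / b).
    { assert (b * q > b * (- (h / b) * (1 + 1 / b))) by nra.
      replace (b * (- (h / b) * (1 + 1 / b))) with (- h - h / b) in H by (field; lra). lra. }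
    assert (H3 : b * (b * q) > - h * b - h).
    { replace (- h * b - h) with (b * (- h - h / b)) by (field; lra). nra. }
    destruct (Rle_lt_dec 0 (b * q + h)); nra.
Qed.

Lemma dpl_eq f x l1 l2 : derivable_pt_lim f x l1 -> l1 = l2 -> derivable_pt_lim f x l2.
Proof. intros H E; subst; auto. Qed.

Lemma F2x_dec (h : R) (f f' : R -> R) (hh : 0 < h)
  (hfpos : forall x, 0 <= x -> 0 < f x)
  (hder : has_deriv_on_nonneg f f')
  (hneg : forall x, 0 <= x -> f' x < 0)
  (hq : forall x, 0 <= x -> qmap f f' x > - (h / f 0) * (1 + 1 / f 0))
  a b y z : 0 <= a -> a < b -> 0 <= y -> 0 <= z -> F2 h f b y z < F2 h f a y z.
Proof.
  intros Ha Hab Hy Hz.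
  set (ft := fun t => f (Rmax 0 t)).
  set (A := f y * f z). set (B := f y + 1).
  set (phi := (id * ft * fct_cte A + (fct_cte h * ft) * fct_cte B + fct_cte h)%F).
  set (dphi := fun t => (1 * ft t + t * f' t) * A + (h * f' t) * B).
  assert (Hphi : forall t, 0 <= t -> phi t = F2 h f t y z).
  { intros t Ht. unfold phi, F2, ft, A, B, plus_fct, mult_fct, fct_cte, id.
    rewrite ft_eq by lra. ring. }
  assert (Hc : forall t, continuity_pt phi t).
  { intros t. unfold phi.
    repeat first [apply continuity_pt_plus | apply continuity_pt_mult
                 | apply continuity_pt_const; intros ?; reflexivity
                 | apply derivable_continuous_pt, derivable_pt_id
                 | apply (ft_cont f f' hder)]. }
  assert (Hd : forall t, 0 < t -> derivable_pt_lim phi t (dphi t)).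
  { intros t Ht. eapply dpl_eq. unfold phi.
    repeat first [apply derivable_pt_lim_plus | apply derivable_pt_lim_mult
                 | apply derivable_pt_lim_const | apply derivable_pt_lim_id
                 | apply (ft_deriv f f' hder); lra].
    unfold dphi, fct_cte, id, mult_fct. ring. }
  assert (Hn : forall t, 0 <= t -> dphi t < 0).
  { intros t Ht. unfold dphi, ft. rewrite ft_eq by lra.
    assert (Hb0 : 0 < f 0) by (apply hfpos; lra).
    pose proof (hneg t Ht). pose proof (hfpos t Ht).
    pose proof (bracket_pos h (f 0) (f y) (f z) (qmap f f' t) hh Hb0 (hfpos y Hy)
      (fle f f' hder hneg 0 y ltac:(lra) Hy) (hfpos z Hz)
      (fle f f' hder hneg 0 z ltac:(lra) Hz) (hq t Ht)) as HP.
    unfold qmap in HP.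
    replace ((1 * f t + t * f' t) * A + h * f' t * B) with
      (f' t * (f y * f z * (t + f t / f' t) + h * (f y + 1))).
    2:{ unfold A, B. field. lra. }
    apply Rmult_neg_pos; lra. }
  pose proof (decr_MVT phi dphi Hc Hd Hn a b Ha Hab) as H.
  rewrite !Hphi in H by lra. exact H.
Qed.

Lemma F2_mono_fyz h (f : R -> R) x y z y' z' : 0 < h -> 0 <= x -> 0 < f x ->
  0 < f y -> 0 < f z -> f y <= f y' -> f z <= f z' -> F2 h f x y z <= F2 h f x y' z'.
Proof.
  intros Hh Hx Hfx Hy Hz H1 H2. unfold F2.
  assert (H3 : f y * f z <= f y' * f z') by (apply Rmult_le_compat; lra).
  assert (H4 : x * f x * (f y * f z) <= x * f x * (f y' * f z')).
  { apply Rmult_le_compat_l; auto. apply Rmult_le_pos; lra. }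
  assert (H5 : h * f x * f y <= h * f x * f y').
  { apply Rmult_le_compat_l; auto. apply Rmult_le_pos; lra. }
  nra.
Qed.

Lemma F2_bounds (h : R) (f f' : R -> R) (hh : 0 < h)
  (hfpos : forall x, 0 <= x -> 0 < f x)
  (hder : has_deriv_on_nonneg f f')
  (hneg : forall x, 0 <= x -> f' x < 0)
  (hq : forall x, 0 <= x -> qmap f f' x > - (h / f 0) * (1 + 1 / f 0))
  m M x y z : 0 <= m -> m <= x <= M -> m <= y <= M -> m <= z <= M ->
  F2 h f M M M <= F2 h f x y z <= F2 h f m m m.
Proof.
  intros Hm Hx Hy Hz.
  assert (Hxle : forall a b y z, 0 <= a -> a <= b -> 0 <= y -> 0 <= z ->
                 F2 h f b y z <= F2 h f a y z).
  { intros a b y0 z0 Ha Hab Hy0 Hz0. destruct (Req_dec a b). subst; lra.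
    left; apply (F2x_dec h f f'); auto; lra. }
  split.
  - apply Rle_trans with (F2 h f x M M).
    + apply Hxle; lra.
    + apply F2_mono_fyz; auto; try lra; try (apply hfpos; lra);
      apply (fle f f' hder hneg); lra.
  - apply Rle_trans with (F2 h f m y z).
    + apply Hxle; lra.
    + apply F2_mono_fyz; auto; try lra; try (apply hfpos; lra);
      apply (fle f f' hder hneg); lra.
Qed.

Lemma Un_cv_ext (a b : nat -> R) l : (forall k, a k = b k) -> Un_cv a l -> Un_cv b l.
Proof. intros E H eps He. destruct (H eps He) as [N HN]. exists N. intros n Hn.
  rewrite <- E. auto. Qed.

Lemma Un_cv_const (c : R) : Un_cv (fun _ => c) c.
Proof. intros eps He. exists 0%nat. intros. unfold R_dist. rewrite Rminus_diag, Rabs_R0; auto. Qed.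

Lemma g_seq h (f f' : R -> R) (hder : has_deriv_on_nonneg f f') (a : nat -> R) l :
  (forall k, 0 <= a k) -> 0 <= l -> Un_cv a l ->
  Un_cv (fun k => gmap h f (a k)) (gmap h f l).
Proof.
  intros Ha Hl Hc.
  assert (Hf : Un_cv (fun k => f (a k)) (f l)).
  { pose proof (continuity_seq _ a l (ft_cont f f' hder l) Hc) as H.
    simpl in H. rewrite ft_eq in H by auto.
    eapply Un_cv_ext; [|exact H]. intros k; simpl. apply ft_eq; auto. }
  unfold gmap, F2.
  repeat first [apply CV_plus | apply CV_mult | exact Hc | exact Hf | apply Un_cv_const].
Qed.

Lemma cv_le (a : nat -> R) l c : Un_cv a l -> (forall k, a k <= c) -> l <= c.
Proof.
  intros H Hb. destruct (Rle_lt_dec l c); auto.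
  destruct (H (l - c) ltac:(lra)) as [N HN]. specialize (HN N (le_n _)).
  specialize (Hb N). unfold R_dist, Rabs in HN. destruct Rcase_abs in HN; lra.
Qed.

Lemma cv_ge (a : nat -> R) l c : Un_cv a l -> (forall k, c <= a k) -> c <= l.
Proof.
  intros H Hb. destruct (Rle_lt_dec c l); auto.
  destruct (H (c - l) ltac:(lra)) as [N HN]. specialize (HN N (le_n _)).
  specialize (Hb N). unfold R_dist, Rabs in HN. destruct Rcase_abs in HN; lra.
Qed.

Lemma cv_shift (a : nat -> R) l : Un_cv a l -> Un_cv (fun k => a (S k)) l.
Proof. intros H eps He. destruct (H eps He) as [N HN]. exists N. intros n Hn.
  apply HN. lia. Qed.

Fixpoint br (g : R -> R) (k : nat) : R * R :=
  match k with
  | O => (0, g 0)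
  | S k => let p := br g k in (g (snd p), g (fst p))
  end.

Theorem mainTheorem13 (h : R) (f f' : R -> R)
  (hh : 0 < h)
  (hfpos : forall x, 0 <= x -> 0 < f x)
  (hder : has_deriv_on_nonneg f f')
  (hneg : forall x, 0 <= x -> f' x < 0)
  (hlim : tf_tends_to_0 f)
  (hg : no_two_cycle (gmap h f))
  (hq : forall x, 0 <= x -> qmap f f' x > - (h / f 0) * (1 + 1 / f 0)) :
  forall xbar, 0 <= xbar -> xbar = xbar * f xbar + h ->
  forall u : nat -> R, is_solution h f u -> Un_cv u xbar.
Proof.
  intros xb Hxb Heq u [H0 [H1 [H2 Hrec]]].
  set (g := gmap h f).
  assert (Hgpos : forall x, 0 <= x -> 0 <= g x).
  { intros x Hx. unfold g, gmap, F2. pose proof (hfpos x Hx).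
    assert (0 <= x * f x * f x * f x) by (repeat apply Rmult_le_pos; lra).
    assert (0 <= h * f x * f x) by (repeat apply Rmult_le_pos; lra).
    assert (0 <= h * f x) by (repeat apply Rmult_le_pos; lra). lra. }
  assert (Hgdec : forall a b, 0 <= a -> a <= b -> g b <= g a).
  { intros a b Ha Hab. unfold g, gmap.
    apply (F2_bounds h f f' hh hfpos hder hneg hq a b a a a); lra. }
  assert (Hfix : g xb = xb).
  { unfold g, gmap, F2. set (F := f xb) in *.
    replace (xb * F * F * F + h * F * F + h * F + h)
      with ((((xb * F + h) * F) + h) * F + h) by ring.
    rewrite <- Heq. rewrite <- Heq. rewrite <- Heq. reflexivity. }
  assert (Hu : forall n, 0 <= u n /\ 0 <= u (S n) /\ 0 <= u (S (S n))).
  { induction n as [|n IH]; [auto|].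
    destruct IH as [A [B C]]. repeat split; auto.
    replace (S (S (S n))) with (n + 3)%nat by lia. rewrite Hrec.
    replace (n + 2)%nat with (S (S n)) by lia.
    pose proof (hfpos (u n) A). nra. }
  assert (Hu0 : forall n, 0 <= u n) by (intros n; apply Hu).
  assert (Hexp : forall n, u (n + 5)%nat = F2 h f (u (n+2)%nat) (u (n+1)%nat) (u n)).
  { intros n. replace (n + 5)%nat with ((n + 2) + 3)%nat by lia. rewrite Hrec.
    replace (n + 2 + 2)%nat with ((n + 1) + 3)%nat by lia. rewrite Hrec.
    replace (n + 1 + 2)%nat with (n + 3)%nat by lia. rewrite Hrec.
    unfold F2. ring. }
  set (m := fun k => fst (br g k)). set (M := fun k => snd (br g k)).
  assert (HmS : forall k, m (S k) = g (M k)) by reflexivity.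
  assert (HMS : forall k, M (S k) = g (m k)) by reflexivity.
  assert (Hinv : forall k, (0 <= m k <= xb /\ xb <= M k) /\ m k <= m (S k) /\ M (S k) <= M k).
  { induction k as [|k IH].
    - assert (xb <= g 0) by (rewrite <- Hfix at 1; apply Hgdec; lra).
      simpl in m, M. unfold m, M; simpl. repeat split; try lra.
      apply Hgpos. lra.
    - destruct IH as [[[A B] C] [D E]].
      assert (0 <= M k) by lra.
      assert (Ha : 0 <= m (S k) <= xb /\ xb <= M (S k)).
      { rewrite HmS, HMS. repeat split.
        - apply Hgpos; lra.
        - rewrite <- Hfix. apply Hgdec; lra.
        - rewrite <- Hfix. apply Hgdec; lra. }
      split; auto. split.
      + rewrite (HmS (S k)), HmS. apply Hgdec; lra.
      + rewrite (HMS (S k)), HMS. apply Hgdec; lra. }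
  assert (Hbr : forall k, exists N, forall n, (N <= n)%nat -> m k <= u n <= M k).
  { induction k as [|k IH].
    - exists 5%nat. intros n Hn. replace n with ((n - 5) + 5)%nat by lia.
      rewrite Hexp. unfold m, M; simpl. split; [|].
      + rewrite <- Hexp. apply Hu0.
      + set (j := (n - 5)%nat).
        set (S0 := u (j+2)%nat + u (j+1)%nat + u j).
        pose proof (Hu0 (j+2)%nat). pose proof (Hu0 (j+1)%nat). pose proof (Hu0 j).
        apply (F2_bounds h f f' hh hfpos hder hneg hq 0 S0); unfold S0; lra.
    - destruct IH as [N HN]. exists (N + 5)%nat. intros n Hn.
      replace n with ((n - 5) + 5)%nat by lia. rewrite Hexp, HmS, HMS.
      pose proof (HN (n - 5 + 2)%nat ltac:(lia)).
      pose proof (HN (n - 5 + 1)%nat ltac:(lia)).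
      pose proof (HN (n - 5)%nat ltac:(lia)).
      destruct (Hinv k) as [[[A B] C] _].
      apply (F2_bounds h f f' hh hfpos hder hneg hq (m k) (M k)); lra. }
  destruct (growing_cv m) as [lm Hlm].
  { intros k; apply Hinv. }
  { exists xb. intros x [i ->]. apply Hinv. }
  destruct (decreasing_cv M) as [LM HLM].
  { intros k; apply Hinv. }
  { exists (- xb). intros x [i ->]. unfold opp_seq. destruct (Hinv i) as [[_ A] _]. lra. }
  assert (Hlm1 : lm <= xb) by (apply (cv_le m); [auto| intros k; apply Hinv]).
  assert (Hlm0 : 0 <= lm) by (apply (cv_ge m); [auto| intros k; apply Hinv]).
  assert (HLM1 : xb <= LM) by (apply (cv_ge M); [auto| intros k; apply Hinv]).
  assert (HM0 : forall k, 0 <= M k) by (intros k; destruct (Hinv k) as [[[A B] C] _]; lra).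
  assert (Hm0 : forall k, 0 <= m k) by (intros k; apply Hinv).
  assert (E1 : g LM = lm).
  { apply (UL_sequence (fun k => m (S k))).
    - apply (Un_cv_ext (fun k => g (M k))). intros; symmetry; apply HmS.
      apply (g_seq h f f' hder); auto; lra.
    - apply cv_shift; auto. }
  assert (E2 : g lm = LM).
  { apply (UL_sequence (fun k => M (S k))).
    - apply (Un_cv_ext (fun k => g (m k))). intros; symmetry; apply HMS.
      apply (g_seq h f f' hder); auto.
    - apply cv_shift; auto. }
  assert (Eq : lm = LM) by (apply hg; auto; lra).
  assert (Elm : lm = xb) by lra.
  intros eps He.
  destruct (Hlm eps He) as [K1 HK1]. destruct (HLM eps He) as [K2 HK2].
  destruct (Hbr (K1 + K2)%nat) as [N HN].
  exists N. intros n Hn. specialize (HN n Hn).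
  specialize (HK1 (K1 + K2)%nat ltac:(lia)). specialize (HK2 (K1 + K2)%nat ltac:(lia)).
  unfold R_dist in *. rewrite <- Elm in *. rewrite <- Eq in HK2.
  unfold Rabs in *. repeat destruct Rcase_abs; lra.
Qed.
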